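(* Let $t$ be a vertex of $P(G,g_0)$. If the operation $\mu_{h,f}$ (for some $h,f\in G_t$) is applicable to $t$, then $\mu_{h,f}(t)$ is a vertex of $P(G,g_0)$ adjacent to $t$. Likewise, if the operation $\mu_h$ (for some $h\in G_t$) is applicable to $t$, then $\mu_h(t)$ is a vertex of $P(G,g_0)$ adjacent to $t$.
   Context: Let $G$ be a finite abelian group of order $D$ with zero element $0$, and let $G^+=G\setminus\{0\}$. For $g_0\in G$, let $T(G,g_0)$ be the set of vectors $t=(t(g))_{g\in G^+}\in\mathbb{Z}_{\ge 0}^{G^+}$ with $\sum_{g\in G^+}t(g)g=g_0$ (sum computed in $G$), where the zero vector is excluded when $g_0=0$. The master corner polyhedron is $P(G,g_0)=\mathrm{conv}\,T(G,g_0)\subset\mathbb{R}^{G^+}$. For $t\in T(G,g_0)$ put $G_t=\{g\in G^+ : t(g)>0\}$. Two vertices are adjacent if the segment joining them is an edge (one-dimensional face) of $P(G,g_0)$. $\mu$-operations: For $t\in T(G,g_0)$ and distinct $h,f\in G_t$ with $t(h)\le t(f)$ and $h+f\neq 0$, the operation $\mu_{h,f}$ is said to be applicable to $t$, and $s=\mu_{h,f}(t)$ is defined by $s(h)=0$, $s(f)=t(f)-t(h)$, $s(h+f)=t(h+f)+t(h)$, and $s(g)=t(g)$ for all other $g\in G^+$. For $t\in T(G,g_0)$ and $h\in G_t$ with $t(h)>1$ and $t(h)h\neq 0$, the operation $\mu_h$ is applicable to $t$, and $s=\mu_h(t)$ is defined by $s(h)=0$, $s(t(h)h)=t(t(h)h)+1$,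 and $s(g)=t(g)$ for all other $g\in G^+$. *)

(* Defs.v *)
From HB Require Import structures.
From mathcomp Require Import all_boot all_order all_algebra.
Set Implicit Arguments. Unset Strict Implicit. Unset Printing Implicit Defensive.
Import Order.TTheory GRing.Theory Num.Theory.
Local Open Scope ring_scope.

Section Corner.
Variable G : finZmodType.

Definition Gp : finType := {g : G | g != 0}.

Definition ivec := {ffun Gp -> nat}.

Definition inT (g0 : G) (t : ivec) : bool :=
  (\sum_(g : Gp) (val g) *+ t g == g0) &&
  ((g0 == 0) ==> [exists g, t g != 0%N]).

Definition supp (t : ivec) (g : Gp) : bool := (0 < t g)%N.

(* mu_{h,f}(t): s = t - t(h) e_h - t(h) e_f + t(h) e_{h+f} *)
Definition mu2 (t : ivec) (h f : Gp) : ivec :=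
  [ffun g => addn (if g == h then 0%N else if g == f then (t f - t h)%N else t g)
                   (if val g == val h + val f then t h else 0%N)].

Definition mu2_applicable (t : ivec) (h f : Gp) : bool :=
  [&& supp t h, supp t f, h != f, (t h <= t f)%N & val h + val f != 0].

(* mu_h(t): s = t - t(h) e_h + e_{t(h) h} *)
Definition mu1 (t : ivec) (h : Gp) : ivec :=
  [ffun g => addn (if g == h then 0%N else t g)
                   (if val g == val h *+ t h then 1%N else 0%N)].

Definition mu1_applicable (t : ivec) (h : Gp) : bool :=
  [&& supp t h, (1 < t h)%N & val h *+ t h != 0].

Variable R : realFieldType.

Definition emb (t : ivec) : Gp -> R := fun g => (t g)%:R.

Definition inP (g0 : G) (x : Gp -> R) : Prop :=
  exists s : seq (ivec * R),
    [/\ all (fun p => inT g0 p.1) s,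
        all (fun p => 0 <= p.2) s,
        \sum_(p <- s) p.2 = 1
      & forall g, x g = \sum_(p <- s) p.2 * (p.1 g)%:R].

Definition dot (c x : Gp -> R) : R := \sum_(g : Gp) c g * x g.

Definition on_face (g0 : G) (c x : Gp -> R) : Prop :=
  inP g0 x /\ forall y, inP g0 y -> dot c y <= dot c x.

Definition is_vertex (g0 : G) (v : Gp -> R) : Prop :=
  exists c : Gp -> R, forall x, on_face g0 c x <-> (forall g, x g = v g).

Definition adjacent (g0 : G) (v w : Gp -> R) : Prop :=
  (exists g, v g != w g) /\
  exists c : Gp -> R, forall x, on_face g0 c x <->
    exists lam : R, [/\ 0 <= lam, lam <= 1 &
                        forall g, x g = lam * v g + (1 - lam) * w g].

End Corner.

(* Main.v *)
Require Import Defs.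
From HB Require Import structures.
From mathcomp Require Import all_boot all_order all_algebra.
From mathcomp Require Import ring lra zify.
Set Implicit Arguments. Unset Strict Implicit. Unset Printing Implicit Defensive.
Import Order.TTheory GRing.Theory Num.Theory.

Section Aux.
Variable G : finZmodType.
Variable R : realFieldType.
Local Open Scope ring_scope.

Lemma dot_comb (c : Gp G -> R) (s : seq (ivec G * R)) (x : Gp G -> R) :
  (forall g, x g = \sum_(p <- s) p.2 * (p.1 g)%:R) ->
  dot c x = \sum_(p <- s) p.2 * dot c (emb R p.1).
Proof.
move=> Hx; rewrite /dot.
under eq_bigr do rewrite Hx mulr_sumr.
rewrite exchange_big /=; apply: eq_bigr => p _; rewrite mulr_sumr.
by apply: eq_bigr => g _; rewrite /emb mulrCA.
Qed.

Lemma dot_ext (c x y : Gp G -> R) : (forall g, x g = y g) -> dot c x = dot c y.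
Proof. by move=> H; apply: eq_bigr => g _; rewrite H. Qed.

Lemma bound_inP g0 (c : Gp G -> R) M x :
  (forall p, inT g0 p -> dot c (emb R p) <= M) -> inP g0 x -> dot c x <= M.
Proof.
move=> Hb [s [Ht Hl Hs Hx]]; rewrite (dot_comb c Hx).
apply: (@le_trans _ _ (\sum_(p <- s) p.2 * M)); last by rewrite -mulr_suml Hs mul1r.
rewrite big_seq_cond [X in _ <= X]big_seq_cond; apply: ler_sum => p /andP[Hp _].
by apply: ler_wpM2l; [exact: (allP Hl p Hp) | apply: Hb; exact: (allP Ht p Hp)].
Qed.

Lemma face_terms g0 (c : Gp G -> R) M (s : seq (ivec G * R)) x :
  (forall p, inT g0 p -> dot c (emb R p) <= M) ->
  all (fun p => inT g0 p.1) s -> all (fun p => 0 <= p.2) s ->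
  \sum_(p <- s) p.2 = 1 -> (forall g, x g = \sum_(p <- s) p.2 * (p.1 g)%:R) ->
  M <= dot c x -> forall p, p \in s -> p.2 = 0 \/ dot c (emb R p.1) = M.
Proof.
move=> Hb Ht Hl Hs Hx HM.
have Hnn : forall p, p \in s -> 0 <= p.2 * (M - dot c (emb R p.1)).
  move=> p Hp; apply: mulr_ge0; first exact: (allP Hl p Hp).
  by rewrite subr_ge0; apply: Hb; exact: (allP Ht p Hp).
have Hsum : \sum_(p <- s) p.2 * (M - dot c (emb R p.1)) = M - dot c x.
  rewrite (dot_comb c Hx).
  under eq_bigr do rewrite mulrBr.
  by rewrite sumrB -mulr_suml Hs mul1r.
have H0 : \sum_(p <- s) p.2 * (M - dot c (emb R p.1)) = 0.
  apply/eqP; rewrite eq_le; apply/andP; split; first by rewrite Hsum subr_le0.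
  by rewrite big_seq_cond sumr_ge0 // => p /andP[Hp _]; apply: Hnn.
move=> p Hp.
have : p.2 * (M - dot c (emb R p.1)) = 0.
  move: H0; rewrite big_seq => /eqP; rewrite psumr_eq0; last by move=> i; apply: Hnn.
  by move=> /allP /(_ p Hp); rewrite Hp /= => /eqP.
move/eqP; rewrite mulf_eq0 => /orP[/eqP -> | ]; first by left.
by rewrite subr_eq0 => /eqP ->; right.
Qed.

Lemma vertex_of g0 (c : Gp G -> R) M (s : ivec G) :
  inT g0 s -> dot c (emb R s) = M ->
  (forall p, inT g0 p -> dot c (emb R p) <= M) ->
  (forall p, inT g0 p -> dot c (emb R p) = M -> forall g, p g = s g) ->
  is_vertex g0 (emb R s).
Proof.
move=> Hsin Hsd Hb Heq; exists c => x; split.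
  case=> [[q [Ht Hl Hs Hx]] Hmax].
  have HM : M <= dot c x.
    rewrite -Hsd; apply: Hmax; exists [:: (s, 1)]; split => //=.
    - by rewrite Hsin.
    - by rewrite ler01.
    - by rewrite big_seq1.
    - by move=> g; rewrite big_seq1 mul1r.
  have Hterm := face_terms Hb Ht Hl Hs Hx HM.
  move=> g; rewrite Hx.
  transitivity (\sum_(p <- q) p.2 * (s g)%:R); last by rewrite -mulr_suml Hs mul1r.
  rewrite big_seq [RHS]big_seq; apply: eq_bigr => p Hp.
  case: (Hterm p Hp) => [-> | H]; first by rewrite !mul0r.
  by rewrite (Heq _ (allP Ht p Hp) H).
move=> Hx; split.
  exists [:: (s, 1)]; split => //=.
  - by rewrite Hsin.
  - by rewrite ler01.
  - by rewrite big_seq1.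
  - by move=> g; rewrite big_seq1 mul1r Hx.
move=> y Hy; rewrite (dot_ext c Hx) Hsd; exact: bound_inP Hb Hy.
Qed.

Lemma edge_of g0 (c : Gp G -> R) M (t s : ivec G) (d : Gp G -> R) (a : R)
    (J : ivec G -> R) :
  inT g0 t -> inT g0 s -> (exists g, t g != s g) -> 0 < a ->
  (forall g, (s g)%:R = (t g)%:R - a * d g) ->
  (forall p, inT g0 p -> dot c (emb R p) <= M) ->
  dot c (emb R t) = M -> dot c (emb R s) = M ->
  (forall p, inT g0 p -> dot c (emb R p) = M ->
     (0 <= J p /\ J p <= a) /\ forall g, (p g)%:R = (t g)%:R - J p * d g) ->
  adjacent g0 (emb R t) (emb R s).
Proof.
move=> Htin Hsin [g1 Hg1] Ha Hsd Hb Htd Hsdt HJ; split.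
  by exists g1; rewrite /emb eqr_nat.
exists c => x; split.
  case=> [[q [Ht Hl Hs Hx]] Hmax].
  have HM : M <= dot c x.
    rewrite -Htd; apply: Hmax; exists [:: (t, 1)]; split => //=.
    - by rewrite Htin.
    - by rewrite ler01.
    - by rewrite big_seq1.
    - by move=> g; rewrite big_seq1 mul1r.
  have Hterm := face_terms Hb Ht Hl Hs Hx HM.
  set Jx := \sum_(p <- q) p.2 * J p.1.
  have Hpt : forall p, p \in q -> forall g,
      p.2 * (p.1 g)%:R = p.2 * ((t g)%:R - J p.1 * d g).
    move=> p Hp g; case: (Hterm p Hp) => [-> | H]; first by rewrite !mul0r.
    by have [_ ->] := HJ _ (allP Ht p Hp) H.
  have HJb : forall p, p \in q -> 0 <= p.2 * J p.1 /\ p.2 * J p.1 <= p.2 * a.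
    move=> p Hp; case: (Hterm p Hp) => [-> | H]; first by rewrite !mul0r lexx.
    have [[H1 H2] _] := HJ _ (allP Ht p Hp) H.
    have Hl0 := allP Hl p Hp.
    by split; [apply: mulr_ge0 | apply: ler_wpM2l].
  have HJ0 : 0 <= Jx.
    by rewrite /Jx big_seq sumr_ge0 // => p Hp; case: (HJb p Hp).
  have HJa : Jx <= a.
    apply: (@le_trans _ _ (\sum_(p <- q) p.2 * a)); last by rewrite -mulr_suml Hs mul1r.
    by rewrite /Jx big_seq [X in _ <= X]big_seq; apply: ler_sum => p Hp; case: (HJb p Hp).
  have Hxg : forall g, x g = (t g)%:R - Jx * d g.
    move=> g; rewrite Hx big_seq (eq_bigr _ (fun p Hp => Hpt p Hp g)) -big_seq.
    under eq_bigr do rewrite mulrBr mulrA.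
    by rewrite sumrB -mulr_suml Hs mul1r -mulr_suml.
  have Hu0 : 0 <= Jx / a by rewrite divr_ge0 // ltW.
  have Hu1 : Jx / a <= 1 by rewrite ler_pdivrMr // mul1r.
  exists (1 - Jx / a); split; [lra | lra | ].
  move=> g; rewrite /emb Hxg Hsd; field.
  by rewrite gt_eqF.
case=> lam [H0 H1 Hx].
have Hxs : forall g, x g = \sum_(p <- [:: (t, lam); (s, 1 - lam)]) p.2 * (p.1 g)%:R.
  by move=> g; rewrite big_cons big_seq1 Hx.
split.
  exists [:: (t, lam); (s, 1 - lam)]; split => //=.
  - by rewrite Htin Hsin.
  - by rewrite H0 subr_ge0 H1.
  - by rewrite big_cons big_seq1 /= addrC subrK.
move=> y Hy; rewrite (dot_comb c Hxs) big_cons big_seq1 /= Htd Hsdt.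
have -> : lam * M + (1 - lam) * M = M by ring.
exact: bound_inP Hb Hy.
Qed.
End Aux.
Section Main.
Variable G : finZmodType.
Variable R : realFieldType.
Local Open Scope ring_scope.

Lemma sum_shift (q : Gp G) (w : Gp G -> nat) (p p' : ivec G) (k : nat) :
  \sum_(g : Gp G) val g *+ w g = val q ->
  (forall g, p g + k * w g = p' g + (if g == q then k else 0))%N ->
  \sum_(g : Gp G) val g *+ p g = \sum_(g : Gp G) val g *+ p' g.
Proof.
move=> Hw H.
have E : \sum_(g : Gp G) val g *+ (p g + k * w g)%N =
         \sum_(g : Gp G) val g *+ (p' g + (if g == q then k else 0))%N.
  by apply: eq_bigr => g _; rewrite H.
move: E; rewrite !(eq_bigr _ (fun g _ => mulrnDr _ _ _)) !big_split /=.
have -> : \sum_(g : Gp G) val g *+ (k * w g)%N = val q *+ k.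
  rewrite -Hw -sumrMnl; apply: eq_bigr => g _; by rewrite mulnC mulrnA.
have -> : \sum_(g : Gp G) val g *+ (if g == q then k else 0%N) = val q *+ k.
  rewrite (bigD1 q) //= eqxx big1 => [|g /negbTE -> //]; by rewrite addr0.
by move/addIr.
Qed.

Lemma dot_shift (c : Gp G -> R) (q : Gp G) (w : Gp G -> nat) (p p' : ivec G) (k : nat) :
  (forall g, p g + k * w g = p' g + (if g == q then k else 0))%N ->
  dot c (emb R p) + k%:R * dot c (fun g => (w g)%:R) = dot c (emb R p') + k%:R * c q.
Proof.
move=> H; rewrite /dot mulr_sumr -big_split /=.
have -> : k%:R * c q = \sum_(g : Gp G) c g * (if g == q then k else 0)%:R.
  rewrite (bigD1 q) //= eqxx big1 => [|g /negbTE -> //]; last by rewrite mulr0.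
  by rewrite addr0 mulrC.
rewrite -big_split /=; apply: eq_bigr => g _.
rewrite /emb mulrCA -mulrDr -mulrDr -natrM -!natrD; congr (_ * _%:R); exact: H.
Qed.

Definition tr (q : Gp G) (w : Gp G -> nat) (p : ivec G) : ivec G :=
  [ffun g => if g == q then 0%N else (p g + p q * w g)%N].

Lemma tr_rel (q : Gp G) (w : Gp G -> nat) (p : ivec G) g : w q = 0%N -> (p g + p q * w g = tr q w p g + (if g == q then p q else 0))%N.
Proof. move=> Hwq; rewrite /tr ffunE; case: (g =P q) => [-> | _]; last by rewrite addn0.
by rewrite Hwq muln0 addn0 add0n.
Qed.

Lemma mu_generic g0 (c : Gp G -> R) (t s : ivec G) (q h' : Gp G) (w : Gp G -> nat) (a : nat) :
  inT g0 t ->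
  (forall p, inT g0 p -> p != t -> dot c (emb R p) < dot c (emb R t)) ->
  w q = 0%N -> (0 < w h')%N -> t h' = (a * w h')%N -> (0 < a)%N ->
  \sum_(g : Gp G) val g *+ w g = val q ->
  (forall g, s g + a * w g = t g + (if g == q then a else 0))%N ->
  is_vertex g0 (emb R s) /\ adjacent g0 (emb R t) (emb R s).
Proof.
move=> Htin Hc Hwq Hwh Hth Ha Hw Hrel.
have Hqh : h' != q by apply/eqP => E; move: Hwh; rewrite E Hwq.
have Hsq : s q = (t q + a)%N by have := Hrel q; rewrite eqxx Hwq muln0 addn0.
have Hsin : inT g0 s.
  move: Htin; rewrite /inT (sum_shift Hw Hrel) => /andP[-> _] /=.
  by apply/implyP => _; apply/existsP; exists q; rewrite Hsq; lia.
have Htrin : forall p, inT g0 p -> inT g0 (tr q w p).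
  move=> p; rewrite /inT -(sum_shift Hw (tr_rel p^~ Hwq)) => /andP[-> /implyP H] /=.
  apply/implyP => /H /existsP [g Hg]; apply/existsP.
  case: (posnP (p q)) => Hpq.
    exists g; rewrite /tr ffunE; case: (g =P q) => [E|_]; first by move: Hg; rewrite E Hpq.
    by rewrite Hpq mul0n addn0.
  exists h'; rewrite /tr ffunE (negbTE Hqh).
  by rewrite -lt0n addn_gt0 muln_gt0 Hpq Hwh orbT.
set del := dot c (fun g => (w g)%:R) - c q.
have dot_tr : forall p, dot c (emb R (tr q w p)) = dot c (emb R p) + del * (p q)%:R.
  move=> p; have := dot_shift c (tr_rel p^~ Hwq); rewrite /del; move=> E.
  apply: (addIr ((p q)%:R * c q)); rewrite -E; ring.
have Hst : s != t by apply/eqP => E; move: Hsq; rewrite E; lia.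
have Hdel : 0 < del.
  have E := dot_shift c Hrel.
  have Hl := Hc s Hsin Hst.
  have Ha' : 0 < (a%:R : R) by rewrite ltr0n.
  have : 0 < a%:R * del by rewrite /del; lra.
  by rewrite pmulr_rgt0.
have Hle : forall p, inT g0 p -> dot c (emb R (tr q w p)) <= dot c (emb R t).
  move=> p Hp; case: (eqVneq (tr q w p) t) => [-> //|Hne].
  exact: ltW (Hc _ (Htrin p Hp) Hne).
have Htq : t q = 0%N.
  have := Hle t Htin; rewrite dot_tr -[X in _ <= X](addr0) lerD2l pmulr_rle0 // lern0.
  by move/eqP.
set c' := fun g => c g + (if g == q then del else 0).
have dotc' : forall p : ivec G, dot c' (emb R p) = dot c (emb R p) + del * (p q)%:R.
  move=> p; rewrite /dot /c'; under eq_bigr do rewrite mulrDl.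
  rewrite big_split /=; congr (_ + _).
  rewrite (bigD1 q) //= eqxx big1 ?addr0 // => g /negbTE ->.
  by rewrite mul0r.
set M := dot c (emb R t).
have Hb' : forall p, inT g0 p -> dot c' (emb R p) <= M.
  by move=> p Hp; rewrite dotc' -dot_tr; apply: Hle.
have Heq' : forall p, inT g0 p -> dot c' (emb R p) = M -> tr q w p = t.
  move=> p Hp; rewrite dotc' -dot_tr => E.
  case: (eqVneq (tr q w p) t) => // Hne.
  by have := Hc _ (Htrin p Hp) Hne; rewrite E /M ltxx.
have Htd' : dot c' (emb R t) = M by rewrite dotc' Htq mulr0 addr0.
have Htrs : tr q w s = t.
  apply/ffunP => g; rewrite /tr ffunE Hsq Htq add0n.
  case: eqP => [-> | /eqP Hg]; first by rewrite Htq.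
  by have := Hrel g; rewrite (negbTE Hg) addn0.
have Hsd' : dot c' (emb R s) = M by rewrite dotc' -dot_tr Htrs.
have trE : forall p g, tr q w p = t ->
    (t q = 0 /\ (g != q -> p g + p q * w g = t g))%N.
  move=> p g E; split => [|Hg].
    by have := congr1 (fun f : ivec G => f q) E; rewrite /tr ffunE eqxx.
  by have := congr1 (fun f : ivec G => f g) E; rewrite /tr ffunE (negbTE Hg).
split; last first.
  apply: (@edge_of G R g0 c' M t s (fun g => (w g)%:R - (if g == q then 1 else 0))
            a%:R (fun p => (p q)%:R)) => //.
  - by exists q; rewrite Hsq; apply/eqP; lia.
  - by rewrite ltr0n.
  - move=> g; rewrite /emb; case: eqP => [-> | /eqP Hg].
      by rewrite Hsq Htq Hwq add0n; ring.
    by have := Hrel g; rewrite (negbTE Hg) addn0 => <-; rewrite natrD natrM; ring.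
  - move=> p Hp E; have Ht := Heq' p Hp E; split.
      split; first by rewrite ler0n.
      have [_ H] := trE p h' Ht; have := H Hqh; rewrite Hth ler_nat => E2.
      by rewrite -(leq_pmul2r Hwh); lia.
    move=> g; rewrite /emb; case: eqP => [-> | /eqP Hg].
      by have [-> _] := trE p g Ht; rewrite Hwq; ring.
    by have [_ H] := trE p g Ht; rewrite -(H Hg) natrD natrM; ring.
set c'' := fun g => c' g - (if g == h' then 1 else 0).
have dotc'' : forall p : ivec G, dot c'' (emb R p) = dot c' (emb R p) - (p h')%:R.
  move=> p; rewrite /dot /c''; under eq_bigr do rewrite mulrBl.
  rewrite sumrB; congr (_ - _).
  rewrite (bigD1 h') //= eqxx big1 ?addr0 ?mul1r // => g /negbTE ->.
  by rewrite mul0r.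
have Hsh : s h' = 0%N by have := Hrel h'; rewrite (negbTE Hqh) addn0 Hth; lia.
apply: (@vertex_of G R g0 c'' M s) => //.
- by rewrite dotc'' Hsd' Hsh subr0.
- move=> p Hp; rewrite dotc''; have := Hb' p Hp; have := ler0n R (p h'); lra.
move=> p Hp; rewrite dotc'' => E.
have H0 := ler0n R (p h'); have H1 := Hb' p Hp.
have E1 : dot c' (emb R p) = M by lra.
have E2 : (p h')%:R = 0 :> R by lra.
move/eqP: E2; rewrite pnatr_eq0 => /eqP Hph.
have Ht := Heq' p Hp E1.
have Hpq : p q = a.
  have [_ H] := trE p h' Ht; have := H Hqh; rewrite Hph add0n Hth.
  by move/eqP; rewrite eqn_pmul2r // => /eqP.
move=> g; case: (eqVneq g q) => [-> | Hg]; first by rewrite Hpq Hsq Htq.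
have [_ H] := trE p g Ht; have := H Hg; have := Hrel g; rewrite (negbTE Hg) Hpq; lia.
Qed.

Lemma sum_pt (h : Gp G) k : \sum_(g : Gp G) val g *+ ((g == h) * k)%N = val h *+ k.
Proof.
rewrite (bigD1 h) //= eqxx mul1n big1 ?addr0 // => g /negbTE ->.
by rewrite mul0n mulr0n.
Qed.

Lemma sum_add (p p' : ivec G) (h : Gp G) k :
  (forall g, p g = p' g + (g == h) * k)%N ->
  \sum_(g : Gp G) val g *+ p g = \sum_(g : Gp G) val g *+ p' g + val h *+ k.
Proof.
move=> H; rewrite -sum_pt -big_split /=; apply: eq_bigr => g _.
by rewrite H mulrnDr.
Qed.

Lemma inP_emb g0 (p : ivec G) : inT g0 p -> inP g0 (emb R p).
Proof.
move=> Hp; exists [:: (p, 1)]; split => //=.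
- by rewrite Hp.
- by rewrite ler01.
- by rewrite big_seq1.
- by move=> g; rewrite big_seq1 mul1r.
Qed.

Lemma strict_of g0 (t : ivec G) : is_vertex g0 (emb R t) ->
  exists c : Gp G -> R,
    forall p, inT g0 p -> p != t -> dot c (emb R p) < dot c (emb R t).
Proof.
case=> c Hc; exists c => p Hp Hne.
have [_ Hmax] := (Hc (emb R t)).2 (fun g => erefl).
have Hle : dot c (emb R p) <= dot c (emb R t).
  by apply: Hmax; exact: inP_emb.
rewrite lt_neqAle Hle andbT; apply/eqP => E.
have Hf : on_face g0 c (emb R p).
  by split; [exact: inP_emb | move=> y Hy; rewrite E; exact: Hmax].
have Hpt := (Hc _).1 Hf.
move/eqP: Hne; apply; apply/ffunP => g.
by have := Hpt g; rewrite /emb => /eqP; rewrite eqr_nat => /eqP.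
Qed.

End Main.
Local Open Scope ring_scope.

Theorem theorem3 (G : finZmodType) (R : realFieldType) (g0 : G) (t : ivec G) :
  inT g0 t -> is_vertex g0 (emb R t) ->
  (forall h f : Gp G, mu2_applicable t h f ->
     is_vertex g0 (emb R (mu2 t h f)) /\ adjacent g0 (emb R t) (emb R (mu2 t h f))) /\
  (forall h : Gp G, mu1_applicable t h ->
     is_vertex g0 (emb R (mu1 t h)) /\ adjacent g0 (emb R t) (emb R (mu1 t h))).
Proof.
move=> Htin Hv; have [c Hc] := strict_of Hv; split.
  move=> h f /and5P[Hh Hf Hhf Hle Hnz].
  rewrite /supp in Hh Hf.
  pose q : Gp G := exist _ (val h + val f) Hnz.
  have Hvq : val q = val h + val f by [].
  have Hhq : (h == q) = false.
    apply/negbTE/eqP => E; move: (valP f); rewrite -[val f](addKr (val h)) -Hvq -E.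
    by rewrite addNr eqxx.
  have Hfq : (f == q) = false.
    apply/negbTE/eqP => E; move: (valP h); rewrite -[val h](addrK (val f)) -Hvq -E.
    by rewrite subrr eqxx.
  have Hfh : (f == h) = false by rewrite eq_sym; exact/negbTE.
  apply: (@mu_generic G R g0 c t _ q h (fun g => ((g == h) + (g == f))%N) (t h)) => //=.
  - by rewrite eq_sym Hhq eq_sym Hfq.
  - by rewrite eqxx.
  - by rewrite eqxx (negbTE Hhf) muln1.
  - rewrite (eq_bigr (fun g => val g *+ ((g == h) * 1)%N + val g *+ ((g == f) * 1)%N)).
      by rewrite big_split /= !sum_pt.
    by move=> g _; rewrite !muln1 mulrnDr.
  move=> g; rewrite /mu2 ffunE.
  have -> : (val g == val h + val f) = (g == q) by rewrite -Hvq val_eqE.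
  case: (eqVneq g h) => [-> | Hgh].
    by rewrite ?eqxx (negbTE Hhf) Hhq /=; lia.
  case: (eqVneq g f) => [-> | Hgf].
    rewrite ?eqxx ?Hfh Hfq /=; set x := t h in Hle *; set y := t f in Hle *; lia.
  rewrite ?(negbTE Hgh) ?(negbTE Hgf) /=.
  by case: (g == q); lia.
move=> h /and3P[Hh Hb Hnz]; rewrite /supp in Hh.
case: (eqVneq (val h *+ t h) (val h)) => Hm.
  exfalso.
  pose p1 : ivec G := [ffun g => (t g + (g == h) * (t h - 1))%N].
  pose p2 : ivec G := [ffun g => if g == h then 1%N else t g].
  have Hz : val h *+ (t h - 1) = 0.
    apply: (addIr (val h)); rewrite add0r -{2}(mulr1n (val h)) -mulrnDr.
    by rewrite subnK ?Hm // ltnW.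
  have Hp1 : inT g0 p1.
    move: Htin; rewrite /inT (@sum_add _ p1 t h (t h - 1)%N) => [|g]; last by rewrite ffunE.
    rewrite Hz addr0 => /andP[-> _] /=; apply/implyP => _; apply/existsP; exists h.
    by rewrite ffunE eqxx; set x := t h in Hb *; lia.
  have Hp2 : inT g0 p2.
    move: Htin; rewrite /inT (@sum_add _ t p2 h (t h - 1)%N) => [|g]; last first.
      by rewrite ffunE; case: (g =P h) => [-> | _]; rewrite /= ?muln0 ?addn0 //; set x := t h in Hb *; lia.
    rewrite Hz addr0 => /andP[-> _] /=; apply/implyP => _; apply/existsP; exists h.
    by rewrite ffunE eqxx.
  have Hn1 : p1 != t.
    apply/eqP => E; have := congr1 (fun f : ivec G => f h) E; rewrite /= ffunE eqxx; set x := t h in Hb *; lia.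
  have Hn2 : p2 != t.
    apply/eqP => E; have := congr1 (fun f : ivec G => f h) E; rewrite /= ffunE eqxx; set x := t h in Hb *; lia.
  have L1 := Hc _ Hp1 Hn1; have L2 := Hc _ Hp2 Hn2.
  have E : dot c (emb R p1) + dot c (emb R p2) = dot c (emb R t) + dot c (emb R t).
    rewrite /dot -!big_split /=; apply: eq_bigr => g _.
    rewrite /emb -!mulrDr -!natrD !ffunE; congr (_ * _%:R).
    by case: (g =P h) => [-> | _] /=; set x := t h in Hb *; lia.
  clear Hz Hm Hnz; lra.
pose q : Gp G := exist _ (val h *+ t h) Hnz.
have Hvq : val q = val h *+ t h by [].
have Hhq : (h == q) = false.
  by apply/negbTE/eqP => E; move: Hm; rewrite -Hvq -E eqxx.
apply: (@mu_generic G R g0 c t _ q h (fun g => ((g == h) * t h)%N) 1) => //=.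
- by rewrite eq_sym Hhq.
- by rewrite eqxx mul1n; set x := t h in Hb *; lia.
- by rewrite eqxx !mul1n.
- by rewrite sum_pt.
move=> g; rewrite /mu1 ffunE.
have -> : (val g == val h *+ t h) = (g == q) by rewrite -Hvq val_eqE.
case: (eqVneq g h) => [-> | Hgh].
  by rewrite ?eqxx Hhq /=; set x := t h in Hb *; lia.
rewrite ?(negbTE Hgh) /=.
by case: (g == q); set x := t h in Hb *; lia.
Qed.
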